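(* In the setting described in the context, for the iterates of Method 2 one has $\operatorname{zer}(A+B)\subseteq T_k\cap\Gamma_k$ for all $k\in\mathbb N$.
   Context: Let $\mathcal H$ be a real Hilbert space with inner product $\langle\cdot,\cdot\rangle$ and norm $\|\cdot\|$. Let $A_1:\mathcal H\to\mathcal H$ be $\beta$-cocoercive for some $\beta>0$ (i.e. $\langle A_1x-A_1y,x-y\rangle\ge\beta\|A_1x-A_1y\|^2$ for all $x,y$), let $A_2:\mathcal H\to\mathcal H$ be maximally monotone and uniformly continuous, let $B:\mathcal H\rightrightarrows\mathcal H$ be maximally monotone, and set $A:=A_1+A_2$. Assume $\operatorname{zer}(A+B):=\{x:0\in Ax+Bx\}\neq\emptyset$. $J_{\alpha B}:=(I+\alpha B)^{-1}$ for $\alpha>0$, and $P_C$ denotes the orthogonal projection onto a nonempty closed convex set $C$. Fix $\theta,\delta\in(0,1)$, $\bar\delta>0$ with $1-\delta-\bar\delta>0$, and $\alpha_{-1}>0$ with $\alpha_{-1}\le4\beta\bar\delta$. Conceptual Algorithm: pick $x^0\in\mathcal H$. Given $x^k$ and $\alpha_{k-1}$, for $j\in\mathbb N$ let $\bar x^k_j:=J_{\alpha_{k-1}\theta^jB}(x^k-\alpha_{k-1}\theta^jAx^k)$ and let $j(k)$ be the smallest $j\in\mathbb N$ with $\alpha_{k-1}\theta^j\langle A_2x^k-A_2\bar x^k_j,x^k-\bar x^k_j\rangle\le\delta\|x^k-\bar x^k_j\|^2$. Set $\alpha_k:=\alpha_{k-1}\theta^{j(k)}$, $\bar x^k:=J_{\alpha_kB}(x^k-\alpha_kAx^k)$,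 $r_k:=\frac{\bar\delta}{\alpha_k}\|x^k-\bar x^k\|^2$, $T_k:=\{x\in\mathcal H:\langle \frac{x^k-\bar x^k}{\alpha_k}-(A_2x^k-A_2\bar x^k),x-\bar x^k\rangle\le r_k\}$ and $\Gamma_k:=\{x\in\mathcal H:\langle x^0-x^k,x-x^k\rangle\le0\}$. Method 2 sets $x^{k+1}:=P_{T_k\cap\Gamma_k}(x^0)$ and stops if $x^{k+1}=x^k$. *)

(* Defs.v *)
From HB Require Import structures.
From mathcomp Require Import all_boot all_order all_algebra.
From mathcomp Require Import boolp classical_sets reals.
Set Implicit Arguments. Unset Strict Implicit. Unset Printing Implicit Defensive.
Import Order.TTheory GRing.Theory Num.Theory.
Local Open Scope ring_scope.
Local Open Scope classical_set_scope.

Record inner_product (R : realType) (V : lmodType R) := InnerProduct {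
  ip : V -> V -> R;
  ip_sym : forall x y, ip x y = ip y x;
  ip_addl : forall x y z, ip (x + y) z = ip x z + ip y z;
  ip_scalel : forall (a : R) x y, ip (a *: x) y = a * ip x y;
  ip_ge0 : forall x, 0 <= ip x x;
  ip_eq0 : forall x, ip x x = 0 -> x = 0 }.

Section Hilbert.
Variables (R : realType) (V : lmodType R) (H : inner_product V).

Definition hnorm (x : V) : R := Num.sqrt (ip H x x).

Definition hilbert_complete : Prop :=
  forall u : nat -> V,
    (forall e : R, 0 < e -> exists N, forall m n, (N <= m)%N -> (N <= n)%N ->
        hnorm (u m - u n) < e) ->
    exists l : V, forall e : R, 0 < e -> exists N, forall n, (N <= n)%N ->
        hnorm (u n - l) < e.

Definition cocoercive (beta : R) (T : V -> V) : Prop :=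
  forall x y, beta * hnorm (T x - T y) ^+ 2 <= ip H (T x - T y) (x - y).

(* set-valued operators are relations: B x u means u \in B x *)
Definition monotone_op (B : V -> V -> Prop) : Prop :=
  forall x y u v, B x u -> B y v -> 0 <= ip H (u - v) (x - y).

Definition maximally_monotone (B : V -> V -> Prop) : Prop :=
  monotone_op B /\
  forall x u, (forall y v, B y v -> 0 <= ip H (u - v) (x - y)) -> B x u.

Definition graph (T : V -> V) : V -> V -> Prop := fun x u => u = T x.

Definition uniformly_continuous (T : V -> V) : Prop :=
  forall e : R, 0 < e -> exists2 d : R, 0 < d &
    forall x y, hnorm (x - y) < d -> hnorm (T x - T y) < e.

Definition zer (A1 A2 : V -> V) (B : V -> V -> Prop) : set V :=
  [set x | B x (- (A1 x + A2 x))].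

(* resolvent J_{a B} z = (I + a B)^{-1} z : the point p with z - p \in a B p *)
Definition resolvent (B : V -> V -> Prop) (a : R) (z : V) : V :=
  xget 0 [set p | B p (a^-1 *: (z - p))].

Definition is_proj (C : set V) (x0 p : V) : Prop :=
  C p /\ forall y, C y -> hnorm (x0 - p) <= hnorm (x0 - y).

Section Method2.
Variables (A1 A2 : V -> V) (B : V -> V -> Prop)
          (theta delta deltabar alpham1 : R)
          (x : nat -> V) (alpha : nat -> R).

Definition Aop (z : V) : V := A1 z + A2 z.

(* alpha_{k-1}, with alpha_{-1} = alpham1 *)
Definition alpha_prev (k : nat) : R :=
  if k is k'.+1 then alpha k' else alpham1.

Definition xbar_j (k j : nat) : V :=
  let a := alpha_prev k * theta ^+ j in
  resolvent B a (x k - a *: Aop (x k)).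

Definition linesearch_ok (k j : nat) : Prop :=
  alpha_prev k * theta ^+ j *
    ip H (A2 (x k) - A2 (xbar_j k j)) (x k - xbar_j k j)
  <= delta * hnorm (x k - xbar_j k j) ^+ 2.

Definition xbar (k : nat) : V :=
  resolvent B (alpha k) (x k - alpha k *: Aop (x k)).

Definition r_k (k : nat) : R :=
  deltabar / alpha k * hnorm (x k - xbar k) ^+ 2.

Definition T_k (k : nat) : set V :=
  [set z | ip H ((alpha k)^-1 *: (x k - xbar k) - (A2 (x k) - A2 (xbar k)))
                (z - xbar k) <= r_k k].

Definition Gamma_k (k : nat) : set V :=
  [set z | ip H (x 0 - x k) (z - x k) <= 0].

Definition method2_iterates (j : nat -> nat) : Prop :=
  forall k : nat,
    [/\ linesearch_ok k (j k),
        (forall i, (i < j k)%N -> ~ linesearch_ok k i),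
        alpha k = alpha_prev k * theta ^+ j k &
        is_proj (T_k k `&` Gamma_k k) (x 0) (x k.+1)].

End Method2.
End Hilbert.

(* Main.v *)
Require Import Defs.
From HB Require Import structures.
From mathcomp Require Import all_boot all_order all_algebra.
From mathcomp Require Import boolp classical_sets reals.
From mathcomp Require Import ring lra.
Import Order.TTheory GRing.Theory Num.Theory.
Local Open Scope ring_scope.
Local Open Scope classical_set_scope.
Set Implicit Arguments. Unset Strict Implicit.

Section IP.
Variables (R : realType) (V : lmodType R) (H : inner_product V).
Local Notation ip := (ip H).

Lemma ipDl x y z : ip (x + y) z = ip x z + ip y z. Proof. exact: ip_addl. Qed.
Lemma ipZl a x y : ip (a *: x) y = a * ip x y. Proof. exact: ip_scalel. Qed.
Lemma ipDr x y z : ip z (x + y) = ip z x + ip z y.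
Proof. by rewrite ip_sym ipDl ![ip _ z]ip_sym. Qed.
Lemma ipZr a x y : ip y (a *: x) = a * ip y x.
Proof. by rewrite ip_sym ipZl ip_sym. Qed.
Lemma ipNl x y : ip (- x) y = - ip x y.
Proof. by rewrite -scaleN1r ipZl mulN1r. Qed.
Lemma ipNr x y : ip y (- x) = - ip y x.
Proof. by rewrite -scaleN1r ipZr mulN1r. Qed.
Lemma ipBl x y z : ip (x - y) z = ip x z - ip y z.
Proof. by rewrite ipDl ipNl. Qed.
Lemma ipBr x y z : ip z (x - y) = ip z x - ip z y.
Proof. by rewrite ipDr ipNr. Qed.
Lemma ip0l y : ip 0 y = 0.
Proof. by rewrite -(scale0r 0) ipZl mul0r. Qed.
Lemma ip0r y : ip y 0 = 0.
Proof. by rewrite ip_sym ip0l. Qed.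

Lemma hnorm_ge0 x : 0 <= hnorm H x. Proof. exact: sqrtr_ge0. Qed.
Lemma hnorm_sq x : hnorm H x ^+ 2 = ip x x.
Proof. by rewrite /hnorm sqr_sqrtr // ip_ge0. Qed.

Lemma CS a b : ip a b <= hnorm H a * hnorm H b.
Proof.
have [na0|napos] := eqVneq (hnorm H a) 0.
  have : ip a a = 0 by rewrite -hnorm_sq na0 expr0n.
  move/ip_eq0 => az; by rewrite az ip0l mulr_ge0 // hnorm_ge0.
have [nb0|nbpos] := eqVneq (hnorm H b) 0.
  have : ip b b = 0 by rewrite -hnorm_sq nb0 expr0n.
  move/ip_eq0 => bz; by rewrite bz ip0r mulr_ge0 // hnorm_ge0.
set na := hnorm H a; set nb := hnorm H b.
have ha : ip a a = na ^+ 2 by rewrite hnorm_sq.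
have hb : ip b b = nb ^+ 2 by rewrite hnorm_sq.
have h := ip_ge0 H (nb *: a - na *: b).
rewrite !ipBl !ipBr !ipZl !ipZr ha hb (ip_sym H b a) in h.
have na0 : 0 < na by rewrite lt_def napos hnorm_ge0.
have nb0 : 0 < nb by rewrite lt_def nbpos hnorm_ge0.
have h2 : 0 <= na * nb * (2 * (na * nb - ip a b)).
  by move: h; set c := ip a b => h; nra.
rewrite pmulr_rge0 ?mulr_gt0 // in h2; lra.
Qed.

Lemma CSabs a b : `|ip a b| <= hnorm H a * hnorm H b.
Proof.
rewrite ler_norml CS andbT.
have := CS (- a) b; rewrite ipNl.
have -> : hnorm H (- a) = hnorm H a by rewrite /hnorm ipNl ipNr opprK.
lra.
Qed.

Lemma ip_eps_le (c d : R) : (forall t, 0 < t -> t <= 1 -> c <= t * d) -> c <= 0.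
Proof.
move=> h; rewrite leNgt; apply/negP => c0.
set t := c / (c + `|d|).
have hd : 0 <= `|d| by [].
have cd : 0 < c + `|d| by lra.
have t0 : 0 < t by rewrite divr_gt0.
have t1 : t <= 1 by rewrite ler_pdivrMr // mul1r; lra.
have := h t t0 t1.
have : t * d <= t * `|d| by rewrite ler_pM2l // ler_norm.
have -> : t * `|d| = c - t * c.
  rewrite /t; field; lra.
move=> h1 h2.
have : 0 < t * c by rewrite mulr_gt0.
lra.
Qed.

End IP.

Section Minty.
Variables (R : realType) (V : lmodType R) (H : inner_product V).
Hypothesis hc : hilbert_complete H.
Variable N : V -> V -> Prop.
Hypothesis hN : maximally_monotone H N.
Local Notation ip := (ip H).

Definition Ep (x u : V) (r : R) :=
  forall y v, N y v -> ip x v + ip y u - ip y v <= r.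
Definition Fv (x u : V) (r : R) := r + (ip x x + ip u u) / 2.

Lemma E_lb x u r : Ep x u r -> ip x u <= r.
Proof.
move=> hE; rewrite leNgt; apply/negP => hlt.
have Nxu : N x u.
  apply: hN.2 => y v Nyv; have := hE y v Nyv.
  rewrite !ipBl !ipBr (ip_sym H u x) (ip_sym H v x) (ip_sym H u y) (ip_sym H v y).
  lra.
have := hE x u Nxu; lra.
Qed.

Lemma graph_ne : exists y v, N y v.
Proof.
case: (pselect (exists y v, N y v)) => // hno; exists 0, 0.
apply: hN.2 => y v Nyv; exfalso; apply: hno; by exists y, v.
Qed.

Lemma E_graph y v : N y v -> Ep y v (ip y v).
Proof.
move=> Nyv y' v' Nyv'; have := hN.1 _ _ _ _ Nyv Nyv'.
rewrite !ipBl !ipBr (ip_sym H v' y) (ip_sym H v y') (ip_sym H v y) (ip_sym H v' y').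
lra.
Qed.

Lemma Fv_ge0 x u r : Ep x u r -> 0 <= Fv x u r.
Proof.
move=> /E_lb h; have := ip_ge0 H (x + u).
rewrite !ipDl !ipDr (ip_sym H u x) /Fv; lra.
Qed.

Definition Sset := [set t | exists x u r, Ep x u r /\ t = Fv x u r].

Lemma Sset_inf : has_inf Sset.
Proof.
split.
  have [y [v Nyv]] := graph_ne.
  by exists (Fv y v (ip y v)), y, v, (ip y v); split => //; apply: E_graph.
exists 0 => t [x [u [r [hE ->]]]]; exact: Fv_ge0.
Qed.

Definition mm := inf Sset.

Lemma mm_le x u r : Ep x u r -> mm <= Fv x u r.
Proof. move=> hE; apply: (ge_inf (Sset_inf).2); by exists x, u, r. Qed.

Lemma mm_ge0 : 0 <= mm.
Proof.
apply: lb_le_inf; first exact: Sset_inf.1.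
move=> t [x [u [r [hE ->]]]]; exact: Fv_ge0.
Qed.

Lemma strong_conv x1 u1 r1 x2 u2 r2 : Ep x1 u1 r1 -> Ep x2 u2 r2 ->
  ip (x1 - x2) (x1 - x2) + ip (u1 - u2) (u1 - u2) <=
  4 * (Fv x1 u1 r1 + Fv x2 u2 r2 - 2 * mm).
Proof.
move=> h1 h2.
have hm : Ep (2^-1 *: (x1 + x2)) (2^-1 *: (u1 + u2)) (2^-1 * (r1 + r2)).
  move=> y v Nyv; have := h1 y v Nyv; have := h2 y v Nyv.
  rewrite !ipZl !ipZr !ipDl !ipDr; lra.
have := mm_le hm; rewrite /Fv !ipZl !ipZr !ipDl !ipDr ?ipNl ?ipNr.
rewrite (ip_sym H x2 x1) (ip_sym H u2 u1); lra.
Qed.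

Lemma min_seq : {s : nat -> V * V * R | forall n,
  Ep (s n).1.1 (s n).1.2 (s n).2 /\ Fv (s n).1.1 (s n).1.2 (s n).2 < mm + n.+1%:R^-1}.
Proof.
have h : forall n : nat, exists t : V * V * R,
    Ep t.1.1 t.1.2 t.2 /\ Fv t.1.1 t.1.2 t.2 < mm + n.+1%:R^-1.
  move=> n; have e0 : 0 < n.+1%:R^-1 :> R by rewrite invr_gt0 ltr0n.
  have [t [x [u [r [hE ->]]]] ht] := inf_adherent e0 Sset_inf.
  by exists (x, u, r).
have [f hf] := choice h; by exists f.
Qed.

Lemma inv_small (e : R) : 0 < e -> exists M : nat, forall n, (M <= n)%N -> n.+1%:R^-1 < e.
Proof.
move=> e0; exists (Num.Def.archi_bound (e^-1)) => n hn.
have ei : 0 <= e^-1 by rewrite invr_ge0 ltW.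
have h := archi_boundP ei.
have hb : (Num.Def.archi_bound e^-1)%:R <= n%:R :> R by rewrite ler_nat.
have hn1 : n%:R < n.+1%:R :> R by rewrite ltr_nat.
rewrite -[_^-1]mul1r ltr_pdivrMr ?ltr0n //.
have : e * e^-1 = 1 by rewrite mulfV // gt_eqF.
nra.
Qed.

Lemma norm_lt (d : V) (e : R) : 0 < e -> ip d d < e ^+ 2 -> hnorm H d < e.
Proof.
move=> e0 h; rewrite -hnorm_sq in h; have := hnorm_ge0 H d; nra.
Qed.

Let s := projT1 min_seq.
Let xs n := (s n).1.1.
Let us n := (s n).1.2.
Let rq n := (s n).2.
Let hs n : Ep (xs n) (us n) (rq n) /\ Fv (xs n) (us n) (rq n) < mm + n.+1%:R^-1 :=
  projT2 min_seq n.

Lemma sc_seq n k : ip (xs n - xs k) (xs n - xs k) + ip (us n - us k) (us n - us k)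
  < 4 * (n.+1%:R^-1 + k.+1%:R^-1).
Proof.
have [h1 f1] := hs n; have [h2 f2] := hs k.
have := strong_conv h1 h2; move: f1 f2; set a := n.+1%:R^-1; set b := k.+1%:R^-1; set F1 := Fv _ _ _; set F2 := Fv _ _ _; set X := ip _ _ + _; lra.
Qed.

Lemma cauchy_gen (f : nat -> V) :
  (forall n k, ip (f n - f k) (f n - f k) < 4 * (n.+1%:R^-1 + k.+1%:R^-1)) ->
  forall e : R, 0 < e -> exists M, forall m n, (M <= m)%N -> (M <= n)%N ->
        hnorm H (f m - f n) < e.
Proof.
move=> hf e e0.
have e8 : 0 < e ^+ 2 / 8 by rewrite divr_gt0 // exprn_gt0.
have [M hM] := inv_small e8.
exists M => m n hm hn; apply: norm_lt => //.
have := hf m n; have := hM m hm; have := hM n hn; set a := m.+1%:R^-1; set b := n.+1%:R^-1; lra.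
Qed.

Lemma xs_cauchy e : 0 < e -> exists M, forall m n, (M <= m)%N -> (M <= n)%N ->
        hnorm H (xs m - xs n) < e.
Proof.
apply: cauchy_gen => n k; have := sc_seq n k; have := ip_ge0 H (us n - us k); set a := n.+1%:R^-1; set b := k.+1%:R^-1; lra.
Qed.

Lemma us_cauchy e : 0 < e -> exists M, forall m n, (M <= m)%N -> (M <= n)%N ->
        hnorm H (us m - us n) < e.
Proof.
apply: cauchy_gen => n k; have := sc_seq n k; have := ip_ge0 H (xs n - xs k); set a := n.+1%:R^-1; set b := k.+1%:R^-1; lra.
Qed.

Let lp := cid (hc xs_cauchy).
Let lq := cid (hc us_cauchy).
Let p := projT1 lp.
Let q := projT1 lq.
Let hp : forall e : R, 0 < e -> exists M, forall n, (M <= n)%N -> hnorm H (xs n - p) < e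
  := projT2 lp.
Let hq : forall e : R, 0 < e -> exists M, forall n, (M <= n)%N -> hnorm H (us n - q) < e
  := projT2 lq.
Let rs := mm - (ip p p + ip q q) / 2.

Lemma Ep_lim : Ep p q rs.
Proof.
move=> y v Nyv; rewrite /rs.
set L := ip p v + ip y q - ip y v.
rewrite leNgt; apply/negP => hlt.
set g := L - (mm - (ip p p + ip q q) / 2).
have g0 : 0 < g by rewrite /g; lra.
set M := hnorm H (v + p) + hnorm H (y + q).
have M0 : 0 <= M by rewrite /M addr_ge0 // hnorm_ge0.
set del := g / (3 * (M + 1)).
have del0 : 0 < del by rewrite divr_gt0 //; lra.
have delM : del * M <= g / 3.
  rewrite /del mulrAC ler_pdivrMr; last lra.
  have -> : g / 3 * (3 * (M + 1)) = g * M + g by field.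
  lra.
have [N1 hN1] := hp del0.
have [N2 hN2] := hq del0.
have g3 : 0 < g / 3 by rewrite divr_gt0.
have [N3 hN3] := inv_small g3.
set n := maxn N1 (maxn N2 N3).
have hn1 := hN1 n (leq_maxl _ _).
have hn2 := hN2 n (leq_trans (leq_maxl _ _) (leq_maxr _ _)).
have hn3 := hN3 n (leq_trans (leq_maxr _ _) (leq_maxr _ _)).
have [hE hF] := hs n.
have hEn := hE y v Nyv.
have c1 := CSabs H (xs n - p) (v + p).
have c2 := CSabs H (us n - q) (y + q).
rewrite ler_norml in c1; case/andP: c1 => c1 _.
rewrite ler_norml in c2; case/andP: c2 => c2 _.
have d1 : hnorm H (xs n - p) * hnorm H (v + p) <= del * hnorm H (v + p).
  by apply: ler_wpM2r; [exact: hnorm_ge0| exact: ltW].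
have d2 : hnorm H (us n - q) * hnorm H (y + q) <= del * hnorm H (y + q).
  by apply: ler_wpM2r; [exact: hnorm_ge0| exact: ltW].
have delM' : del * hnorm H (v + p) + del * hnorm H (y + q) <= g / 3.
  by rewrite -mulrDr.
have gE : g = L - (mm - (ip p p + ip q q) / 2) by [].
have LE : L = ip p v + ip y q - ip y v by [].
have hx := ip_ge0 H (xs n - p).
have hu := ip_ge0 H (us n - q).
move: hF; rewrite /Fv => hF.
rewrite !ipDl !ipDr ?ipNl ?ipNr in c1 c2 hx hu.
rewrite (ip_sym H p (xs n)) in hx.
rewrite (ip_sym H q (us n)) in hu.
rewrite (ip_sym H (us n) y) (ip_sym H q y) in c2.
move: hn3 hF; set a := n.+1%:R^-1 => hn3 hF.
lra.
Qed.

Lemma var_ineq y v : N y v -> 0 <= ip y v - rs + ip p (y - p) + ip q (v - q).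
Proof.
move=> Nyv.
set w := y - p; set z := v - q.
suff : - (ip y v - rs + ip p w + ip q z) <= 0 by lra.
apply: (@ip_eps_le R _ ((ip w w + ip z z) / 2)) => t t0 t1.
have hE : Ep (p + t *: w) (q + t *: z) (rs + t * (ip y v - rs)).
  move=> y' v' Nyv'. have h1 := Ep_lim Nyv'. have h2 := E_graph Nyv Nyv'.
  rewrite /w /z !ipDl !ipDr !ipZl !ipZr ?ipDl ?ipDr ?ipNl ?ipNr.
  have k1 : 0 <= (1 - t) * (rs - (ip p v' + ip y' q - ip y' v')).
    by apply: mulr_ge0; lra.
  have k2 : 0 <= t * (ip y v - (ip y v' + ip y' v - ip y' v')).
    by apply: mulr_ge0; lra.
  lra.
have h := mm_le hE; rewrite /Fv !ipDl !ipDr !ipZl !ipZr (ip_sym H w p) (ip_sym H z q) in h.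
have mE : mm = rs + (ip p p + ip q q) / 2 by rewrite /rs; lra.
have h2 : 0 <= t * ((ip y v - rs + ip p w + ip q z) + t * ((ip w w + ip z z) / 2)).
  lra.
rewrite pmulr_rge0 // in h2; lra.
Qed.

Lemma minty_core : exists x, N x (- x).
Proof.
have lb := E_lb Ep_lim.
have Nqp : N (- q) (- p).
  apply: hN.2 => y v Nyv; have := var_ineq Nyv; have := ip_ge0 H (p + q).
  rewrite !ipDl !ipDr ?ipNl ?ipNr (ip_sym H q p) (ip_sym H v q) (ip_sym H v y).
  lra.
have := var_ineq Nqp.
rewrite ?ipDl ?ipDr ?ipNl ?ipNr (ip_sym H q p) => h.
have h0 : ip (p + q) (p + q) = 0.
  apply/eqP; rewrite eq_le ip_ge0 andbT.
  rewrite !ipDl !ipDr (ip_sym H q p); lra.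
have e : p = - q by apply/eqP; rewrite -addr_eq0; apply/eqP; exact: ip_eq0 h0.
exists p; by rewrite -e in Nqp.
Qed.

End Minty.

Lemma resolvent_spec (R : realType) (V : lmodType R) (H : inner_product V)
  (hc : hilbert_complete H) (B : V -> V -> Prop) (hB : maximally_monotone H B)
  (a : R) (z : V) : 0 < a ->
  B (resolvent B a z) (a^-1 *: (z - resolvent B a z)).
Proof.
move=> a0.
suff hex : exists p, B p (a^-1 *: (z - p)).
  exact: (@xgetPex _ 0 [set p | B p (a^-1 *: (z - p))] hex).
have ai : 0 < a^-1 by rewrite invr_gt0.
have an : a != 0 by rewrite gt_eqF.
pose N := fun y c => B y (a^-1 *: (z + c)).
have hNm : maximally_monotone H N.
  split.
  - move=> x1 y1 u v h1 h2; have := hB.1 _ _ _ _ h1 h2.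
    rewrite !ipBl !ipZl !ipDl => h.
    have : 0 <= a^-1 * (ip H u (x1 - y1) - ip H v (x1 - y1)) by lra.
    by rewrite pmulr_rge0.
  - move=> x1 c hx; rewrite /N; apply: hB.2 => y v Byv.
    have Nyv : N y (a *: v - z).
      by rewrite /N addrC subrK scalerA mulVf // scale1r.
    have := hx y (a *: v - z) Nyv.
    have -> : ip H (a^-1 *: (z + c) - v) (x1 - y) =
              a^-1 * ip H (c - (a *: v - z)) (x1 - y).
      rewrite !ipBl !ipZl !ipDl ?ipBl ?ipZl ?ipNl ?ipDl; field; exact: an.
    move=> h; apply: mulr_ge0 => //; exact: ltW.
have [p hp] := minty_core hc hNm.
by exists p.
Qed.

Lemma young (R : realType) (V : lmodType R) (H : inner_product V) (E D : V) (b : R) :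
  0 < b -> ip H E D <= b * ip H E E + (4 * b)^-1 * ip H D D.
Proof.
move=> b0; have := ip_ge0 H ((2 * b) *: E - D).
rewrite !ipBl !ipBr !ipZl !ipZr (ip_sym H D E) => h.
have h4 : 0 < 4 * b by lra.
have -> : b * ip H E E + (4 * b)^-1 * ip H D D =
   ip H E D + (4 * b ^+ 2 * ip H E E - 4 * b * ip H E D + ip H D D) / (4 * b).
  field; lra.
rewrite lerDl divr_ge0 //; [lra | exact: ltW].
Qed.

Lemma halfspace_conv (R : realType) (V : lmodType R) (H : inner_product V)
  (U c p y : V) (r t : R) : ip H U (p - c) <= r -> ip H U (y - c) <= r ->
  0 <= t -> t <= 1 -> ip H U (p + t *: (y - p) - c) <= r.
Proof.
move=> h1 h2 t0 t1.
rewrite !ipDr !ipZr ?ipDr ?ipNr in h1 h2 *.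
have k1 : 0 <= (1 - t) * (r - (ip H U p - ip H U c)) by apply: mulr_ge0; lra.
have k2 : 0 <= t * (r - (ip H U y - ip H U c)) by apply: mulr_ge0; lra.
lra.
Qed.

Lemma proj_ineq (R : realType) (V : lmodType R) (H : inner_product V)
  (C : set V) (x0 p y : V) : is_proj H C x0 p -> C y ->
  (forall t : R, 0 <= t -> t <= 1 -> C (p + t *: (y - p))) ->
  ip H (x0 - p) (y - p) <= 0.
Proof.
move=> [Cp hp] Cy hconv.
apply: (@ip_eps_le R _ (ip H (y - p) (y - p) / 2)) => t t0 t1.
have := hp _ (hconv t (ltW t0) t1).
rewrite opprD addrA => h.
have h2 : ip H (x0 - p) (x0 - p) <= ip H (x0 - p - t *: (y - p)) (x0 - p - t *: (y - p)).
  rewrite -!hnorm_sq; have := hnorm_ge0 H (x0 - p); nra.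
move: h2; move: (x0 - p) => u; move: (y - p) => w.
rewrite [ip H (u - _) _]ipBl !ipBr !ipZl !ipZr (ip_sym H w u) => h2.
have h3 : 0 <= t * (t * (ip H w w / 2) - ip H u w) by lra.
rewrite pmulr_rge0 // in h3; lra.
Qed.

Lemma vec1 (R : realType) (V : lmodType R) (a : R) (x y w : V) : a != 0 ->
  a^-1 *: (x - a *: y - w) = a^-1 *: (x - w) - y.
Proof. by move=> an; rewrite addrAC scalerBr scalerA mulVf // scale1r. Qed.

Unset Implicit Arguments.

Theorem lemma4p11 (R : realType) (V : lmodType R) (H : inner_product V)
  (A1 A2 : V -> V) (B : V -> V -> Prop) (beta theta delta deltabar alpham1 : R)
  (x : nat -> V) (alpha : nat -> R) (j : nat -> nat) :
  hilbert_complete H ->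
  0 < beta -> cocoercive H beta A1 ->
  maximally_monotone H (graph A2) -> uniformly_continuous H A2 ->
  maximally_monotone H B ->
  zer A1 A2 B !=set0 ->
  0 < theta < 1 -> 0 < delta < 1 -> 0 < deltabar -> 0 < 1 - delta - deltabar ->
  0 < alpham1 -> alpham1 <= 4 * beta * deltabar ->
  method2_iterates H A1 A2 B theta delta deltabar alpham1 x alpha j ->
  forall k : nat,
    zer A1 A2 B `<=` T_k H A1 A2 B deltabar x alpha k `&` Gamma_k H x k.
Proof.
move=> hc beta0 hco hA2 _ hB _ /andP[th0 th1] _ db0 _ a0 aleq hit.
have thp n : 0 < theta ^+ n <= 1.
  by rewrite exprn_gt0 //= exprn_ile1 // ltW.
have apos : forall k, 0 < alpha k /\ alpha k <= alpham1.
  elim=> [|k [ih1 ih2]].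
    have [_ _ -> _] := hit 0%N; rewrite /=.
    have /andP[h1 h2] := thp (j 0%N); split; first by rewrite mulr_gt0.
    by rewrite ger_pMr.
  have [_ _ -> _] := hit k.+1; rewrite /=.
  have /andP[h1 h2] := thp (j k.+1); split; first by rewrite mulr_gt0.
  apply: le_trans ih2; by rewrite ger_pMr.
have Tin : forall k z, zer A1 A2 B z -> T_k H A1 A2 B deltabar x alpha k z.
  move=> k z hz; have [ak akle] := apos k.
  have an : alpha k != 0 by rewrite gt_eqF.
  rewrite /T_k /r_k /=.
  have hres := resolvent_spec hc hB (x k - alpha k *: Aop A1 A2 (x k)) ak.
  rewrite -/(xbar A1 A2 B x alpha k) in hres.
  set xb := xbar A1 A2 B x alpha k in hres *.
  have m1 := hB.1 _ _ _ _ hres hz.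
  rewrite vec1 // /Aop in m1.
  have m2 : 0 <= ip H (A2 xb - A2 z) (xb - z) by apply: hA2.1.
  have m3 := hco (x k) z.
  rewrite hnorm_sq in m3.
  rewrite [x k - z](_ : _ = (x k - xb) + (xb - z)) in m3; last by rewrite addrA subrK.
  rewrite -[z - xb]opprB ipNr hnorm_sq.
  have hy := young H (A1 (x k) - A1 z) (x k - xb) beta0.
  have kk : (4 * beta)^-1 <= deltabar / alpha k.
    have b4 : 0 < 4 * beta by lra.
    rewrite ler_pdivlMr // ler_pdivrMl //; lra.
  have kk2 := ler_wpM2r (ip_ge0 H (x k - xb)) kk.
  move: m1 m2 m3 hy kk2.
  move: (x k - xb) => D; move: (xb - z) => W.
  rewrite !ipBl !ipDl !ipNl !ipZl ?ipDr ?ipBl ?ipNl.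
  rewrite ?ipDl ?ipNr ?ipNl.
  lra.
have Gin : forall k z, zer A1 A2 B z -> Gamma_k H x k z.
  elim=> [|k ih] z hz.
    by rewrite /Gamma_k /= subrr ip0l.
  have [_ _ _ hpr] := hit k.
  rewrite /Gamma_k /=.
  apply: (proj_ineq hpr); first by split; [exact: Tin | exact: ih].
  move=> t t0 t1; have [Tp Gp] := hpr.1; split.
  - rewrite /T_k /=; exact: (halfspace_conv Tp (Tin _ _ hz) t0 t1).
  - rewrite /Gamma_k /=; exact: (halfspace_conv Gp (ih _ hz) t0 t1).
move=> k z hz; split; [exact: Tin | exact: Gin].
Qed.
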